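(* Assume (C1) and (C2). For all $u\in\mathcal{D}$ and all $s,t\ge0$, $$I(u)\ge I(su^++tu^-)+\frac{1-s^q}{q}\langle I'(u),u^+\rangle+\frac{1-t^q}{q}\langle I'(u),u^-\rangle+\Big(\frac{1-s^p}{p}-\frac{1-s^q}{q}\Big)\|u^+\|^p+\Big(\frac{1-t^p}{p}-\frac{1-t^q}{q}\Big)\|u^-\|^p+\sum_{n\in\mathbb{Z}}a(n)\sum_{i=1}^{\frac p2-1}\sum_{j=1}^{i-1}2^{i-j}\big|(\Delta u^+(n))^{p-(i+j)}(\Delta u^-(n))^{i+j}\big|\,\Theta_{i,j},$$ where $$\Theta_{i,j}=\frac{2s^pC_{\frac p2-1}^iC_i^j+s^pC_{\frac p2-1}^{i-1}C_{i-1}^j+2t^pC_{\frac p2-1}^{i-1}C_{i-1}^{j-1}+t^pC_{\frac p2-1}^{i-1}C_{i-1}^j-2s^{p-(i+j)}t^{i+j}C_{\frac p2}^iC_i^j}{2p}\ge0.$$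
   Context: Fix real numbers $p,q,r$ with $1<p<q$, $\frac p2$ a positive integer, and $r\ge1$, and functions $a,b,c:\mathbb{Z}\to(0,+\infty)$. Conditions: - (C1) There is $b_0>0$ with $b(n)\ge b_0$ for all $n$ and $b(n)\to+\infty$ as $|n|\to\infty$. - (C2) There is $c_0>0$ with $c(n)\le c_0$ for all $n$ and $\sum_n c(n)<+\infty$. Notation: - $C_n^k=\binom nk$ is the binomial coefficient. - For a real sequence $u=(u(n))_{n\in\mathbb{Z}}$: $\Delta u(n)=u(n+1)-u(n)$, $u^+(n)=\max\{u(n),0\}$, $u^-(n)=\min\{u(n),0\}$. Spaces: - $E$ is the set of real sequences $u$ with $\|u\|:=\big(\sum_n[a(n)|\Delta u(n)|^p+b(n)|u(n)|^p]\big)^{1/p}<\infty$. - $\mathcal{D}=\{u\in E:\sum_n c(n)|u(n)|^q\ln|u(n)|^r<+\infty\}$, where terms with $u(n)=0$ are read as $0$. For $u,v\in\mathcal{D}$: - $I(u)=\frac1p\|u\|^p+\frac{r}{q^2}\sum_n c(n)|u(n)|^q-\frac1q\sum_n c(n)|u(n)|^q\ln|u(n)|^r$. - $\langle I'(u),v\rangle=\sum_n[a(n)|\Delta u(n)|^{p-2}\Delta u(n)\Delta v(n)+b(n)|u(n)|^{p-2}u(n)v(n)]-\sum_n c(n)|u(n)|^{q-2}u(n)v(n)\ln|u(n)|^r$. *)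

(* Defs.v *)
From Stdlib Require Import Reals ZArith List.
From Coquelicot Require Import Coquelicot.
Open Scope R_scope.

(* |x|^y for x >= 0 and y > 0, with the convention 0^y = 0. *)
Definition rpow (x y : R) : R :=
  if Req_EM_T x 0 then 0 else Rpower x y.

(* Sums over Z: split into n >= 0 and n <= -1 halves. *)
Definition zsummable (f : Z -> R) : Prop :=
  ex_series (fun n : nat => Rabs (f (Z.of_nat n))) /\
  ex_series (fun n : nat => Rabs (f (- Z.of_nat (S n))%Z)).

Definition zsum (f : Z -> R) : R :=
  Series (fun n : nat => f (Z.of_nat n)) +
  Series (fun n : nat => f (- Z.of_nat (S n))%Z).

Definition lsum (l : list nat) (f : nat -> R) : R :=
  fold_right (fun i acc => f i + acc) 0 l.

(* binomial coefficient C_n^k (0 when k > n) *)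
Definition binom (n k : nat) : R :=
  if Nat.leb k n then Binomial.C n k else 0.

Definition fdiff (u : Z -> R) (n : Z) : R := u (n + 1)%Z - u n.
Definition posp (u : Z -> R) (n : Z) : R := Rmax (u n) 0.
Definition negp (u : Z -> R) (n : Z) : R := Rmin (u n) 0.

Definition normp_term (p : R) (a b : Z -> R) (u : Z -> R) (n : Z) : R :=
  a n * rpow (Rabs (fdiff u n)) p + b n * rpow (Rabs (u n)) p.

Definition inE (p : R) (a b : Z -> R) (u : Z -> R) : Prop :=
  zsummable (normp_term p a b u).

Definition normE (p : R) (a b : Z -> R) (u : Z -> R) : R :=
  rpow (zsum (normp_term p a b u)) (/ p).

Definition logterm (q r : R) (c : Z -> R) (u : Z -> R) (n : Z) : R :=
  if Req_EM_T (u n) 0 then 0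
  else c n * rpow (Rabs (u n)) q * ln (rpow (Rabs (u n)) r).

Definition inD (p q r : R) (a b c : Z -> R) (u : Z -> R) : Prop :=
  inE p a b u /\ zsummable (logterm q r c u).

Definition Ifun (p q r : R) (a b c : Z -> R) (u : Z -> R) : R :=
  / p * rpow (normE p a b u) p
  + r / (q ^ 2) * zsum (fun n => c n * rpow (Rabs (u n)) q)
  - / q * zsum (logterm q r c u).

Definition dI (p q r : R) (a b c : Z -> R) (u v : Z -> R) : R :=
  zsum (fun n => a n * rpow (Rabs (fdiff u n)) (p - 2) * fdiff u n * fdiff v n
               + b n * rpow (Rabs (u n)) (p - 2) * u n * v n)
  - zsum (fun n => if Req_EM_T (u n) 0 then 0
                   else c n * rpow (Rabs (u n)) (q - 2) * u n * v n
                        * ln (rpow (Rabs (u n)) r)).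

(* Theta_{i,j}, with p = 2 m *)
Definition Theta (m : nat) (s t : R) (i j : nat) : R :=
  (2 * s ^ (2 * m)%nat * binom (m - 1)%nat i * binom i j
   + s ^ (2 * m)%nat * binom (m - 1)%nat (i - 1)%nat * binom (i - 1)%nat j
   + 2 * t ^ (2 * m)%nat * binom (m - 1)%nat (i - 1)%nat * binom (i - 1)%nat (j - 1)%nat
   + t ^ (2 * m)%nat * binom (m - 1)%nat (i - 1)%nat * binom (i - 1)%nat j
   - 2 * s ^ (2 * m - (i + j))%nat * t ^ (i + j)%nat * binom m i * binom i j)
  / (2 * (2 * INR m)).

(* Main.v *)
Require Import Defs.
From Stdlib Require Import Reals ZArith List Lia Lra.
From Coquelicot Require Import Coquelicot.
Open Scope R_scope.

Fixpoint cb (n k : nat) : R :=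
  match n, k with
  | _, O => 1
  | O, S _ => 0
  | S n', S k' => cb n' k' + cb n' (S k')
  end.

Lemma cb_n0 n : cb n 0 = 1.
Proof. destruct n; reflexivity. Qed.

Lemma cb_SS n k : cb (S n) (S k) = cb n k + cb n (S k).
Proof. reflexivity. Qed.

Lemma cb_ge0 n k : 0 <= cb n k.
Proof.
  revert k; induction n; intros k; destruct k; simpl; try lra.
  pose proof (IHn k); pose proof (IHn (S k)); lra.
Qed.

Lemma cb_zero n k : (n < k)%nat -> cb n k = 0.
Proof.
  revert k; induction n; intros k Hk; destruct k; simpl; try lia; try lra.
  rewrite !IHn by lia. lra.
Qed.

Lemma cb_1 n : cb n 1 = INR n.
Proof.
  induction n; simpl; [reflexivity|]. rewrite cb_n0, IHn. destruct n; simpl; lra.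
Qed.

Lemma cb_absorb n k : cb (S n) (S k) * INR (S k) = INR (S n) * cb n k.
Proof.
  revert k; induction n; intros k.
  - destruct k.
    + simpl. lra.
    + rewrite cb_zero by lia. rewrite (cb_zero 0) by lia. lra.
  - destruct k.
    + rewrite cb_n0, cb_1. simpl (INR 1). ring.
    + rewrite cb_SS. rewrite Rmult_plus_distr_r.
      replace (INR (S (S k))) with (INR (S k) + 1) by (rewrite !S_INR; ring).
      replace (cb (S n) (S k) * (INR (S k) + 1)) with (cb (S n) (S k) * INR (S k) + cb (S n) (S k)) by ring.
      rewrite IHn. rewrite IHn.
      rewrite (cb_SS n k).
      replace (INR (S (S n))) with (INR (S n) + 1) by (rewrite !S_INR; ring).
      ring.
Qed.

Lemma cb_absorb2 n k : (INR (S n) - INR k) * cb (S n) k = INR (S n) * cb n k.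
Proof.
  destruct k.
  - rewrite !cb_n0. simpl (INR 0). ring.
  - pose proof (cb_absorb n k) as H. rewrite cb_SS in *. lra.
Qed.


Definition Bx (n : nat) (x : R) (q : nat -> R) : R :=
  sum_f_R0 (fun j => cb n j * x ^ (n - j) * q j) n.

Lemma Bx_ext n x q q' : (forall j, (j <= n)%nat -> q j = q' j) -> Bx n x q = Bx n x q'.
Proof. intros H; unfold Bx; apply sum_eq; intros; rewrite H; auto. Qed.

Lemma Bx_plus n x q1 q2 : Bx n x (fun j => q1 j + q2 j) = Bx n x q1 + Bx n x q2.
Proof. unfold Bx. rewrite <- sum_plus. apply sum_eq; intros; ring. Qed.

Lemma Bx_scal n x c q : Bx n x (fun j => c * q j) = c * Bx n x q.
Proof. unfold Bx. rewrite scal_sum. apply sum_eq; intros; ring. Qed.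

Lemma Bx_S n x q : Bx (S n) x q = x * Bx n x q + Bx n x (fun j => q (S j)).
Proof.
  unfold Bx.
  rewrite decomp_sum by lia. simpl pred.
  rewrite cb_n0.
  transitivity (x ^ (S n - 0) * q 0%nat +
     sum_f_R0 (fun i => cb n (S i) * x ^ (n - i) * q (S i)) n +
     sum_f_R0 (fun i => cb n i * x ^ (n - i) * q (S i)) n).
  { rewrite Rplus_assoc, <- sum_plus. f_equal; [ring|]. apply sum_eq; intros i Hi.
    rewrite cb_SS. simpl (S n - S i)%nat. ring. }
  f_equal.
  rewrite scal_sum.
  transitivity (sum_f_R0 (fun j => cb n j * x ^ (S n - j) * q j) (S n)).
  { rewrite (decomp_sum _ (S n)) by lia. simpl pred. rewrite cb_n0. f_equal; try ring; try reflexivity. }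
  rewrite tech5. rewrite (cb_zero n (S n)) by lia. rewrite Rmult_0_l, Rmult_0_l, Rplus_0_r.
  apply sum_eq; intros j Hj. rewrite Nat.sub_succ_l by lia. simpl. ring.
Qed.

Lemma Bx_pow n x y : Bx n x (fun j => y ^ j) = (x + y) ^ n.
Proof.
  induction n.
  - unfold Bx; simpl; ring.
  - rewrite Bx_S. rewrite IHn.
    rewrite (Bx_ext n x (fun j => y ^ S j) (fun j => y * y ^ j)) by (intros; simpl; ring).
    rewrite Bx_scal. change (Bx n x (pow y)) with (Bx n x (fun j => y ^ j)). rewrite IHn. simpl. ring.
Qed.

Lemma Bx_nonneg n x q : 0 <= x -> (forall j, (j <= n)%nat -> 0 <= q j) -> 0 <= Bx n x q.
Proof.
  intros Hx Hq. unfold Bx.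
  assert (forall N, (N <= n)%nat -> 0 <= sum_f_R0 (fun j => cb n j * x ^ (n - j) * q j) N).
  { induction N; intros HN; simpl.
    - apply Rmult_le_pos; [apply Rmult_le_pos; [apply cb_ge0|apply pow_le; auto]|apply Hq; lia].
    - apply Rplus_le_le_0_compat; [apply IHN; lia|].
      apply Rmult_le_pos; [apply Rmult_le_pos; [apply cb_ge0|apply pow_le; auto]|apply Hq; lia]. }
  apply H; lia.
Qed.

Lemma pairs_ident m : forall h : nat -> R,
  Bx m 1 (fun i => Bx i 2 (fun j => h (i + j)%nat)) = Bx (2 * m) 1 h.
Proof.
  induction m; intros h.
  - unfold Bx; simpl; ring.
  - rewrite Bx_S.
    set (h' := fun k => h k + 2 * h (S k) + h (S (S k))).
    transitivity (Bx m 1 (fun i => Bx i 2 (fun j => h' (i + j)%nat))).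
    { rewrite Rmult_1_l, <- Bx_plus. apply Bx_ext; intros i Hi.
      rewrite Bx_S.
      unfold h'. rewrite !Bx_plus, !Bx_scal.
      replace (Bx i 2 (fun j => h (S (i + j)))) with (Bx i 2 (fun j => h (S i + j)%nat)) by reflexivity.
      rewrite (Bx_ext i 2 (fun j => h (S (S (i + j)))) (fun j => h (S i + S j)%nat))
        by (intros; f_equal; lia).
      ring. }
    rewrite IHm.
    replace (2 * S m)%nat with (S (S (2 * m))) by lia.
    rewrite !Bx_S. unfold h'. rewrite !Bx_plus, !Bx_scal. ring.
Qed.


Lemma C_n0 n : Binomial.C n 0 = 1.
Proof. unfold Binomial.C. rewrite Nat.sub_0_r. simpl (fact 0). simpl (INR 1).
  field. apply INR_fact_neq_0. Qed.

Lemma C_nn n : Binomial.C n n = 1.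
Proof. unfold Binomial.C. rewrite Nat.sub_diag. simpl (fact 0). simpl (INR 1).
  field. apply INR_fact_neq_0. Qed.

Lemma cb_C n k : (k <= n)%nat -> cb n k = Binomial.C n k.
Proof.
  revert k; induction n; intros k Hk.
  - assert (k = 0%nat) by lia; subst. simpl. rewrite C_n0. reflexivity.
  - destruct k.
    + rewrite cb_n0, C_n0; reflexivity.
    + rewrite cb_SS. destruct (Nat.eq_dec k n).
      * subst. rewrite (cb_zero n (S n)) by lia. rewrite IHn by lia. rewrite !C_nn. ring.
      * rewrite <- pascal by lia. rewrite !IHn by lia. reflexivity.
Qed.

Lemma binom_cb n k : (k <= n)%nat -> binom n k = cb n k.
Proof.
  intros H. unfold binom. apply Nat.leb_le in H. rewrite H. symmetry; apply cb_C.
  apply Nat.leb_le; auto.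
Qed.

Definition gk (P : nat) (s t : R) (k : nat) : R :=
  (1 - INR k / INR P) * s ^ P + INR k / INR P * t ^ P - s ^ (P - k) * t ^ k.

Lemma K_lemma n X Y : Bx (S n) X (fun k => INR k / INR (S n) * Y ^ k) = Y * (X + Y) ^ n.
Proof.
  rewrite <- Bx_pow, <- Bx_scal. unfold Bx. rewrite (decomp_sum _ (S n)) by lia. simpl pred.
  assert (Hz : forall z, INR 0 / INR (S n) * z = 0) by (intros; simpl; unfold Rdiv; ring).
  rewrite Hz, Rmult_0_r, Rplus_0_l.
  apply sum_eq; intros i Hi.
  pose proof (cb_absorb n i) as Ha.
  assert (INR (S n) <> 0) by (apply not_0_INR; lia).
  assert (INR (S i) <> 0) by (apply not_0_INR; lia).
  assert (E : cb (S n) (S i) = INR (S n) * cb n i / INR (S i)) by (rewrite <- Ha; field; auto).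
  rewrite E. simpl (S n - S i)%nat. simpl (Y ^ S i). field. split; auto.
Qed.

Lemma G_eq n s t X Y :
  Bx (S n) 1 (fun k => X ^ (S n - k) * Y ^ k * gk (S n) s t k) =
  s ^ (S n) * ((X + Y) ^ n * X) + t ^ (S n) * ((X + Y) ^ n * Y) - (s * X + t * Y) ^ (S n).
Proof.
  transitivity (s ^ (S n) * Bx (S n) X (fun k => Y ^ k)
      - (s ^ (S n) - t ^ (S n)) * Bx (S n) X (fun k => INR k / INR (S n) * Y ^ k)
      - Bx (S n) (s * X) (fun k => (t * Y) ^ k)).
  { unfold Bx. rewrite !scal_sum, <- !minus_sum. apply sum_eq; intros k Hk.
    unfold gk. rewrite !Rpow_mult_distr, pow1. ring. }
  rewrite !Bx_pow, K_lemma. simpl ((X + Y) ^ S n). ring.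
Qed.

Lemma pow_low s t k : 0 <= t <= s -> INR (S k) * t ^ k * (s - t) <= s ^ (S k) - t ^ (S k).
Proof.
  intros Hst. induction k.
  - simpl. lra.
  - assert (E : s ^ S (S k) - t ^ S (S k) = s * (s ^ (S k) - t ^ (S k)) + t * t ^ k * (s - t))
      by (simpl; ring).
    rewrite E. rewrite (S_INR (S k)).
    set (D := s ^ S k - t ^ S k) in *.
    replace (t ^ S k) with (t * t ^ k) by (simpl; ring).
    assert (0 <= t ^ k) by (apply pow_le; lra).
    assert (0 <= INR (S k)) by apply pos_INR.
    assert (H1 : 0 <= s * (D - INR (S k) * t ^ k * (s - t)))
      by (apply Rmult_le_pos; lra).
    assert (H2 : 0 <= (s - t) * (INR (S k) * t ^ k * (s - t))).
    { apply Rmult_le_pos; [lra|]. apply Rmult_le_pos; [apply Rmult_le_pos|]; lra. }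
    nra.
Qed.

Lemma pow_up s t a : 0 <= t <= s -> s ^ (S a) - t ^ (S a) <= INR (S a) * s ^ a * (s - t).
Proof.
  intros Hst. induction a.
  - simpl. lra.
  - assert (E : s ^ S (S a) - t ^ S (S a) = s * (s ^ (S a) - t ^ (S a)) + t ^ (S a) * (s - t))
      by (simpl; ring).
    rewrite E. rewrite (S_INR (S a)).
    assert (t ^ S a <= s ^ S a) by (apply pow_incr; lra).
    assert (0 <= s ^ a) by (apply pow_le; lra).
    assert (H1 : 0 <= s * (INR (S a) * s ^ a * (s - t) - (s ^ S a - t ^ S a)))
      by (apply Rmult_le_pos; lra).
    assert (H2 : 0 <= (s ^ S a - t ^ S a) * (s - t)) by (apply Rmult_le_pos; lra).
    simpl (s ^ S a) in *. nra.
Qed.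

Lemma amgm_ord a k s t : 0 <= t <= s ->
  INR (a + k) * s ^ a * t ^ k <= INR a * s ^ (a + k) + INR k * t ^ (a + k).
Proof.
  intros Hst. destruct a as [|a'].
  - simpl. lra.
  - pose proof (pow_low s t k Hst) as D1.
    pose proof (pow_up s t a' Hst) as D2.
    rewrite !pow_add. rewrite plus_INR.
    assert (0 <= t ^ k) by (apply pow_le; lra).
    assert (0 <= s ^ a') by (apply pow_le; lra).
    assert (0 <= INR k) by apply pos_INR.
    assert (0 <= INR (S a')) by apply pos_INR.
    assert (P1 : 0 <= (INR k * t ^ k) * (INR (S a') * s ^ a' * (s - t) - (s ^ S a' - t ^ S a')))
      by (apply Rmult_le_pos; [apply Rmult_le_pos|]; lra).
    assert (P2 : 0 <= (INR (S a') * s ^ a') * ((s ^ S k - t ^ S k) - INR (S k) * t ^ k * (s - t)))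
      by (apply Rmult_le_pos; [apply Rmult_le_pos|]; lra).
    rewrite (S_INR k) in P2. simpl (s ^ S a') in *. simpl (s ^ S k) in P2. simpl (t ^ S k) in P2.
    nra.
Qed.

Lemma gk_nonneg P s t k : (1 <= P)%nat -> (k <= P)%nat -> 0 <= s -> 0 <= t -> 0 <= gk P s t k.
Proof.
  intros HP Hk Hs Ht.
  set (a := (P - k)%nat).
  assert (HPa : P = (a + k)%nat) by (unfold a; lia).
  assert (HI : 0 < INR P) by (apply lt_0_INR; lia).
  assert (H : INR a * s ^ (a + k) + INR k * t ^ (a + k) - INR (a + k) * s ^ a * t ^ k >= 0).
  { destruct (Rle_dec t s).
    - pose proof (amgm_ord a k s t ltac:(lra)). lra.
    - pose proof (amgm_ord k a t s ltac:(lra)). rewrite (Nat.add_comm k a) in H. lra. }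
  unfold gk. fold a. rewrite <- HPa in H.
  assert (INR a = INR P - INR k) by (rewrite HPa, plus_INR; ring).
  rewrite H0 in H.
  apply Rmult_le_reg_l with (INR P); auto. rewrite Rmult_0_r.
  replace (INR P * ((1 - INR k / INR P) * s ^ P + INR k / INR P * t ^ P - s ^ a * t ^ k))
    with ((INR P - INR k) * s ^ P + INR k * t ^ P - INR P * s ^ a * t ^ k) by (field; lra).
  lra.
Qed.

Lemma Theta_eq m s t i j : (1 <= i <= m - 1)%nat -> (1 <= j <= i - 1)%nat ->
  Theta m s t i j = cb m i * cb i j * gk (2 * m) s t (i + j) / (2 * INR m).
Proof.
  intros Hi Hj.
  destruct m as [|m1]; [lia|]. destruct i as [|i1]; [lia|]. destruct j as [|j1]; [lia|].
  unfold Theta, gk.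
  replace (S m1 - 1)%nat with m1 by lia.
  replace (S i1 - 1)%nat with i1 by lia.
  replace (S j1 - 1)%nat with j1 by lia.
  rewrite !binom_cb by lia.
  pose proof (cb_absorb2 m1 (S i1)) as r1.
  pose proof (cb_absorb m1 i1) as r2.
  pose proof (cb_absorb2 i1 (S j1)) as r3.
  pose proof (cb_absorb i1 j1) as r4.
  assert (HM : INR (S m1) <> 0) by (apply not_0_INR; lia).
  assert (HI : INR (S i1) <> 0) by (apply not_0_INR; lia).
  assert (E1 : cb m1 (S i1) = (INR (S m1) - INR (S i1)) * cb (S m1) (S i1) / INR (S m1))
    by (rewrite r1; field; auto).
  assert (E2 : cb m1 i1 = cb (S m1) (S i1) * INR (S i1) / INR (S m1))
    by (rewrite r2; field; auto).
  assert (E3 : cb i1 (S j1) = (INR (S i1) - INR (S j1)) * cb (S i1) (S j1) / INR (S i1))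
    by (rewrite r3; field; auto).
  assert (E4 : cb i1 j1 = cb (S i1) (S j1) * INR (S j1) / INR (S i1))
    by (rewrite r4; field; auto).
  rewrite E1, E2, E3, E4.
  rewrite plus_INR, mult_INR. simpl (INR 2).
  field. split; auto.
Qed.


Lemma lsum_app l1 l2 f : lsum (l1 ++ l2) f = lsum l1 f + lsum l2 f.
Proof. induction l1; simpl; [ring|]. rewrite IHl1; ring. Qed.

Lemma lsum_nonneg l f : (forall x, In x l -> 0 <= f x) -> 0 <= lsum l f.
Proof.
  induction l; simpl; intros H; [lra|].
  apply Rplus_le_le_0_compat; [apply H; auto|apply IHl; intros; apply H; auto].
Qed.

Lemma lsum_le l f g : (forall x, In x l -> f x <= g x) -> lsum l f <= lsum l g.
Proof.
  induction l; simpl; intros H; [lra|].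
  apply Rplus_le_compat; [apply H; auto|apply IHl; intros; apply H; auto].
Qed.

Lemma lsum_ext l f g : (forall x, In x l -> f x = g x) -> lsum l f = lsum l g.
Proof.
  induction l; simpl; intros H; [auto|].
  rewrite H by auto. rewrite IHl; auto.
Qed.

Lemma lsum_seq0 N f : lsum (seq 0 (S N)) f = sum_f_R0 f N.
Proof.
  induction N.
  - simpl. ring.
  - rewrite seq_S, lsum_app, IHN. simpl. ring.
Qed.

Lemma lsum_le_sum a n N f : (forall k, (k <= N)%nat -> 0 <= f k) -> (a + n <= S N)%nat ->
  lsum (seq a n) f <= sum_f_R0 f N.
Proof.
  intros Hf Han.
  rewrite <- lsum_seq0.
  replace (S N) with (a + n + (S N - (a + n)))%nat by lia.
  rewrite (seq_app (a + n)), (seq_app a n 0). simpl (0 + a)%nat.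
  rewrite !lsum_app.
  assert (0 <= lsum (seq 0 a) f).
  { apply lsum_nonneg; intros x Hx. apply in_seq in Hx. apply Hf; lia. }
  assert (0 <= lsum (seq (0 + (a + n)) (S N - (a + n))) f).
  { apply lsum_nonneg; intros x Hx. apply in_seq in Hx. apply Hf; lia. }
  lra.
Qed.

Definition Fcore (m : nat) (s t al bt X Y : R) : R :=
  / (2 * INR m) * (X + Y) ^ (2 * m) - / (2 * INR m) * (s * X + t * Y) ^ (2 * m)
  - al * ((X + Y) ^ (2 * m - 1) * X) - bt * ((X + Y) ^ (2 * m - 1) * Y)
  - ((1 - s ^ (2 * m)) / (2 * INR m) - al) * X ^ (2 * m)
  - ((1 - t ^ (2 * m)) / (2 * INR m) - bt) * Y ^ (2 * m).

Definition Ep (m : nat) (s t X Y : R) : R :=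
  lsum (seq 1 (m - 1)) (fun i =>
    lsum (seq 1 (i - 1)) (fun j =>
      2 ^ (i - j) * Rabs (X ^ (2 * m - (i + j)) * Y ^ (i + j)) * Theta m s t i j)).

Lemma Theta_nonneg m s t i j : (1 <= i <= m - 1)%nat -> (1 <= j <= i - 1)%nat ->
  0 <= s -> 0 <= t -> 0 <= Theta m s t i j.
Proof.
  intros Hi Hj Hs Ht. rewrite Theta_eq by auto.
  assert (0 < INR m) by (apply lt_0_INR; lia).
  unfold Rdiv. apply Rmult_le_pos; [|apply Rlt_le, Rinv_0_lt_compat; lra].
  apply Rmult_le_pos; [apply Rmult_le_pos; apply cb_ge0|].
  apply gk_nonneg; auto; lia.
Qed.

Lemma Ep_nonneg m s t X Y : 0 <= s -> 0 <= t -> 0 <= Ep m s t X Y.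
Proof.
  intros Hs Ht. unfold Ep. apply lsum_nonneg; intros i Hi. apply in_seq in Hi.
  apply lsum_nonneg; intros j Hj. apply in_seq in Hj.
  apply Rmult_le_pos; [apply Rmult_le_pos; [apply pow_le; lra|apply Rabs_pos]|].
  apply Theta_nonneg; auto; lia.
Qed.

Lemma core_pos m s t al bt X Y : (1 <= m)%nat -> 0 <= s -> 0 <= t -> 0 <= X -> 0 <= Y ->
  al <= (1 - s ^ (2 * m)) / (2 * INR m) -> bt <= (1 - t ^ (2 * m)) / (2 * INR m) ->
  Ep m s t X Y <= Fcore m s t al bt X Y.
Proof.
  intros Hm Hs Ht HX HY Hal Hat.
  assert (Hp : 0 < 2 * INR m) by (assert (0 < INR m) by (apply lt_0_INR; lia); lra).
  assert (HP : INR (2 * m) = 2 * INR m) by (rewrite mult_INR; reflexivity).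
  set (n := (2 * m - 1)%nat).
  assert (Hn : (2 * m)%nat = S n) by (unfold n; lia).
  set (H := fun k => / (2 * INR m) * (X ^ (S n - k) * Y ^ k * gk (S n) s t k)).
  assert (A : / (2 * INR m) * (s ^ (S n) * ((X + Y) ^ n * X) + t ^ (S n) * ((X + Y) ^ n * Y)
              - (s * X + t * Y) ^ (S n)) <= Fcore m s t al bt X Y).
  { unfold Fcore. fold n. rewrite !Hn.
    assert (E : (X + Y) ^ S n = (X + Y) ^ n * X + (X + Y) ^ n * Y) by (simpl; ring).
    assert (B1 : X ^ S n <= (X + Y) ^ n * X).
    { simpl. rewrite Rmult_comm. apply Rmult_le_compat_r; auto. apply pow_incr; lra. }
    assert (B2 : Y ^ S n <= (X + Y) ^ n * Y).
    { simpl. rewrite Rmult_comm. apply Rmult_le_compat_r; auto. apply pow_incr; lra. }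
    rewrite Hn in Hal, Hat.
    assert (G1 : 0 <= ((1 - s ^ S n) / (2 * INR m) - al) * ((X + Y) ^ n * X - X ^ S n))
      by (apply Rmult_le_pos; lra).
    assert (G2 : 0 <= ((1 - t ^ S n) / (2 * INR m) - bt) * ((X + Y) ^ n * Y - Y ^ S n))
      by (apply Rmult_le_pos; lra).
    rewrite E.
    apply Rminus_le. unfold Rdiv in *.
    match goal with |- ?a - ?b <= 0 => replace (a - b) with
      (- (((1 - s ^ S n) * / (2 * INR m) - al) * ((X + Y) ^ n * X - X ^ S n))
       - (((1 - t ^ S n) * / (2 * INR m) - bt) * ((X + Y) ^ n * Y - Y ^ S n))) by ring end.
    lra. }
  rewrite <- G_eq in A. rewrite <- Bx_scal in A. rewrite <- Hn in A.
  rewrite <- pairs_ident in A.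
  eapply Rle_trans; [|exact A]. clear A.
  assert (Hnn : forall k, (k <= 2 * m)%nat -> 0 <= / (2 * INR m) * (X ^ (S n - k) * Y ^ k * gk (S n) s t k)).
  { intros k Hk. apply Rmult_le_pos; [apply Rlt_le, Rinv_0_lt_compat; lra|].
    apply Rmult_le_pos; [apply Rmult_le_pos; apply pow_le; lra|]. apply gk_nonneg; auto; lia. }
  set (T := fun i j => cb m i * 1 ^ (m - i) * (cb i j * 2 ^ (i - j) *
              (/ (2 * INR m) * (X ^ (S n - (i + j)) * Y ^ (i + j) * gk (S n) s t (i + j))))).
  assert (Tnn : forall i j, (i <= m)%nat -> (j <= i)%nat -> 0 <= T i j).
  { intros i j Hi Hj. unfold T. apply Rmult_le_pos; [apply Rmult_le_pos; [apply cb_ge0|rewrite pow1; lra]|].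
    apply Rmult_le_pos; [apply Rmult_le_pos; [apply cb_ge0|apply pow_le; lra]|]. apply Hnn; lia. }
  transitivity (lsum (seq 1 (m - 1)) (fun i => sum_f_R0 (T i) i)).
  { unfold Ep. apply lsum_le; intros i Hi. apply in_seq in Hi.
    transitivity (lsum (seq 1 (i - 1)) (T i)).
    { right. apply lsum_ext; intros j Hj. apply in_seq in Hj.
      rewrite Theta_eq by lia. unfold T. rewrite pow1.
      rewrite Rabs_right by (apply Rle_ge, Rmult_le_pos; apply pow_le; lra).
      rewrite <- Hn. field. lra. }
    apply lsum_le_sum; [|lia]. intros k Hk; apply Tnn; lia. }
  transitivity (sum_f_R0 (fun i => sum_f_R0 (T i) i) m).
  { apply lsum_le_sum; [|lia]. intros k Hk.
    assert (forall N, (N <= k)%nat -> 0 <= sum_f_R0 (T k) N).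
    { induction N; intros HN; simpl; [apply Tnn; lia|].
      apply Rplus_le_le_0_compat; [apply IHN; lia|apply Tnn; lia]. }
    apply H0; lia. }
  right. unfold Bx at 1. apply sum_eq; intros i Hi.
  unfold T, Bx. rewrite scal_sum. apply sum_eq; intros j Hj. rewrite <- Hn. ring.
Qed.


Lemma pow_neg_even m z : (- z) ^ (2 * m) = z ^ (2 * m).
Proof. rewrite !pow_mult. f_equal. ring. Qed.

Lemma pow_neg_odd m z : (1 <= m)%nat -> (- z) ^ (2 * m - 1) = - z ^ (2 * m - 1).
Proof.
  intros Hm. replace (2 * m - 1)%nat with (1 + 2 * (m - 1))%nat by lia.
  rewrite !pow_add, !pow_mult. replace ((- z) ^ 2) with (z ^ 2) by ring. ring.
Qed.

Lemma pow_abs_even m x : Rabs x ^ (2 * m) = x ^ (2 * m).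
Proof.
  rewrite RPow_abs. apply Rabs_right. rewrite pow_mult. apply Rle_ge, pow_le.
  nra.
Qed.

Lemma core m s t al bt X Y : (1 <= m)%nat -> 0 <= s -> 0 <= t -> X * Y >= 0 ->
  al <= (1 - s ^ (2 * m)) / (2 * INR m) -> bt <= (1 - t ^ (2 * m)) / (2 * INR m) ->
  Ep m s t X Y <= Fcore m s t al bt X Y.
Proof.
  intros Hm Hs Ht HXY Hal Hbt.
  destruct (Rle_dec 0 X) as [HX|HX]; destruct (Rle_dec 0 Y) as [HY|HY];
    try (apply core_pos; auto; fail).
  all: assert (HX' : X <= 0) by nra; assert (HY' : Y <= 0) by nra.
  all: assert (E1 : Ep m s t X Y = Ep m s t (- X) (- Y)) by
        (unfold Ep; apply lsum_ext; intros i _; apply lsum_ext; intros j _;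
         rewrite !Rabs_mult, <- !RPow_abs, !Rabs_Ropp; reflexivity).
  all: assert (E2 : Fcore m s t al bt X Y = Fcore m s t al bt (- X) (- Y)) by
        (unfold Fcore; replace (- X + - Y) with (- (X + Y)) by ring;
         replace (s * - X + t * - Y) with (- (s * X + t * Y)) by ring;
         rewrite !pow_neg_even, !pow_neg_odd by auto; ring).
  all: rewrite E1, E2; apply core_pos; auto; lra.
Qed.

Lemma rpow_0 y : rpow 0 y = 0.
Proof. unfold rpow; destruct (Req_EM_T 0 0); [reflexivity|contradiction]. Qed.

Lemma rpow_pos x y : 0 < x -> rpow x y = Rpower x y.
Proof. intros; unfold rpow; destruct (Req_EM_T x 0); [lra|reflexivity]. Qed.

Lemma rpow_ge0 x y : 0 <= rpow x y.
Proof. unfold rpow; destruct (Req_EM_T x 0); [lra|unfold Rpower; left; apply exp_pos]. Qed.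

Lemma rpow_even m x : (1 <= m)%nat -> rpow (Rabs x) (2 * INR m) = x ^ (2 * m).
Proof.
  intros Hm. destruct (Req_EM_T x 0) as [E|E].
  - subst. rewrite Rabs_R0, rpow_0, pow_i by lia. reflexivity.
  - rewrite rpow_pos by (apply Rabs_pos_lt; auto).
    replace (2 * INR m) with (INR (2 * m)) by (rewrite mult_INR; reflexivity).
    rewrite Rpower_pow by (apply Rabs_pos_lt; auto). apply pow_abs_even.
Qed.

Lemma rpow_pm2 m k x y : (1 <= m)%nat ->
  k * rpow (Rabs x) (2 * INR m - 2) * x * y = k * x ^ (2 * m - 1) * y.
Proof.
  intros Hm. destruct (Req_EM_T x 0) as [E|E].
  - subst. rewrite Rabs_R0, rpow_0, pow_i by lia. ring.
  - rewrite rpow_pos by (apply Rabs_pos_lt; auto).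
    replace (2 * INR m - 2) with (INR (2 * (m - 1))) by
      (rewrite mult_INR, minus_INR by lia; simpl; ring).
    rewrite Rpower_pow by (apply Rabs_pos_lt; auto). rewrite pow_abs_even.
    replace (2 * m - 1)%nat with (2 * (m - 1) + 1)%nat by lia.
    rewrite pow_add. ring.
Qed.

Lemma rpow_mult x y e : 0 <= x -> 0 <= y -> rpow (x * y) e = rpow x e * rpow y e.
Proof.
  intros Hx Hy.
  destruct (Req_EM_T x 0) as [E|E]; [subst; rewrite Rmult_0_l, !rpow_0; ring|].
  destruct (Req_EM_T y 0) as [F|F]; [subst; rewrite Rmult_0_r, !rpow_0; ring|].
  rewrite !rpow_pos by (try apply Rmult_lt_0_compat; lra).
  rewrite Rpower_mult_distr; auto; lra.
Qed.

Lemma rpow_le e x y : 0 <= e -> 0 <= x <= y -> rpow x e <= rpow y e.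
Proof.
  intros He Hxy. destruct (Req_EM_T x 0) as [E|E].
  - subst. rewrite rpow_0. apply rpow_ge0.
  - rewrite !rpow_pos by lra. apply Rle_Rpower_l; auto; lra.
Qed.

Lemma rpow_q2 q x : x <> 0 -> rpow (Rabs x) (q - 2) * x * x = rpow (Rabs x) q.
Proof.
  intros Hx. assert (Ha : 0 < Rabs x) by (apply Rabs_pos_lt; auto).
  rewrite !rpow_pos by auto.
  assert (E : Rabs x * Rabs x = x * x) by (rewrite <- Rabs_mult; apply Rabs_right; nra).
  replace q with ((q - 2) + INR 2) at 2 by (simpl; ring).
  rewrite Rpower_plus, Rpower_pow by auto. rewrite Rmult_assoc, <- E. simpl. ring.
Qed.

Lemma rpow_inv S p : 0 <= S -> 0 < p -> rpow (rpow S (/ p)) p = S.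
Proof.
  intros HS Hp. destruct (Req_EM_T S 0) as [E|E].
  - subst. rewrite !rpow_0. reflexivity.
  - rewrite (rpow_pos S) by lra. rewrite rpow_pos by (unfold Rpower; apply exp_pos).
    rewrite Rpower_mult. replace (/ p * p) with 1 by (field; lra). apply Rpower_1; lra.
Qed.

Lemma ln_rpow x r : 0 < x -> ln (rpow x r) = r * ln x.
Proof. intros; rewrite rpow_pos by auto; apply ln_Rpower. Qed.

Lemma xlnx x : 0 < x -> x - 1 <= x * ln x.
Proof.
  intros Hx. pose proof (exp_ineq1_le (ln (/ x))) as H.
  rewrite exp_ln in H by (apply Rinv_0_lt_compat; auto).
  rewrite ln_Rinv in H by auto.
  apply Rmult_le_compat_l with (r := x) in H; [|lra].
  replace (x * / x) with 1 in H by (field; lra). nra.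
Qed.

Lemma alpha_le s p q : 0 <= s -> 1 < p -> p < q -> (1 - rpow s q) / q <= (1 - rpow s p) / p.
Proof.
  intros Hs Hp Hq. destruct (Req_EM_T s 0) as [E|E].
  - subst. rewrite !rpow_0. unfold Rdiv. rewrite !Rminus_0_r, !Rmult_1_l.
    apply Rinv_le_contravar; lra.
  - rewrite !rpow_pos by lra.
    set (y := Rpower s p). set (rho := q / p).
    assert (Hy : 0 < y) by (unfold y, Rpower; apply exp_pos).
    assert (Hr : 1 < rho).
    { unfold rho. assert (0 < (q - p) / p) by (apply Rdiv_lt_0_compat; lra).
      replace (q / p) with (1 + (q - p) / p) by (field; lra). lra. }
    assert (Eq : Rpower s q = Rpower y rho) by
      (unfold y, rho; rewrite Rpower_mult; f_equal; field; lra).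
    rewrite Eq.
    assert (B : 1 - rho + rho * y <= Rpower y rho).
    { replace rho with (1 + (rho - 1)) at 3 by ring.
      rewrite Rpower_plus, Rpower_1 by auto.
      pose proof (exp_ineq1_le ((rho - 1) * ln y)) as H1.
      change (exp ((rho - 1) * ln y)) with (Rpower y (rho - 1)) in H1.
      pose proof (xlnx y Hy) as H2.
      assert (0 <= (rho - 1) * (y * ln y - (y - 1))) by (apply Rmult_le_pos; lra).
      nra. }
    assert (E2 : (1 - y) / p = rho * (1 - y) / q) by (unfold rho; field; lra).
    rewrite E2. unfold Rdiv. apply Rmult_le_compat_r; [left; apply Rinv_0_lt_compat; lra|].
    lra.
Qed.


Definition zs (f : Z -> R) : Prop :=
  ex_series (fun n : nat => f (Z.of_nat n)) /\ ex_series (fun n : nat => f (- Z.of_nat (S n))%Z).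

Lemma ex_series_R_plus (a b : nat -> R) : ex_series a -> ex_series b -> ex_series (fun n => a n + b n).
Proof. intros; apply (ex_series_plus a b); auto. Qed.

Lemma ex_series_R_scal (c : R) (a : nat -> R) : ex_series a -> ex_series (fun n => c * a n).
Proof. intros; apply (ex_series_scal_l c a); auto. Qed.

Lemma ex_series_R_minus (a b : nat -> R) : ex_series a -> ex_series b -> ex_series (fun n => a n - b n).
Proof.
  intros Ha Hb. apply (ex_series_ext (fun n => a n + (-1) * b n)).
  - intros; simpl; ring.
  - apply ex_series_R_plus; auto. apply ex_series_R_scal; auto.
Qed.

Lemma zs_of f : zsummable f -> zs f.
Proof. intros [H1 H2]; split; apply ex_series_Rabs; auto. Qed.

Lemma zs_abs f : zsummable f -> zs (fun n => Rabs (f n)).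
Proof. intros [H1 H2]; split; auto. Qed.

Lemma zs_plus f g : zs f -> zs g -> zs (fun n => f n + g n).
Proof. intros [A B] [C D]; split; apply ex_series_R_plus; auto. Qed.

Lemma zs_minus f g : zs f -> zs g -> zs (fun n => f n - g n).
Proof. intros [A B] [C D]; split; apply ex_series_R_minus; auto. Qed.

Lemma zs_scal c f : zs f -> zs (fun n => c * f n).
Proof. intros [A B]; split; apply ex_series_R_scal; auto. Qed.

Lemma ex_series_R_le (a b : nat -> R) : (forall n, Rabs (a n) <= b n) -> ex_series b -> ex_series a.
Proof. intros H Hb. apply (@ex_series_le R_AbsRing R_CompleteNormedModule a b); auto. Qed.

Lemma zs_dom f g : (forall n, Rabs (f n) <= g n) -> zs g -> zs f.
Proof.
  intros H [A B]; split; [apply (ex_series_R_le _ _ (fun n => H _) A)|apply (ex_series_R_le _ _ (fun n => H _) B)].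
Qed.

Lemma zsum_plus f g : zs f -> zs g -> zsum (fun n => f n + g n) = zsum f + zsum g.
Proof.
  intros [A B] [C D]; unfold zsum.
  rewrite (Series_plus _ _ A C), (Series_plus _ _ B D). ring.
Qed.

Lemma zsum_minus f g : zs f -> zs g -> zsum (fun n => f n - g n) = zsum f - zsum g.
Proof.
  intros [A B] [C D]; unfold zsum.
  rewrite (Series_minus _ _ A C), (Series_minus _ _ B D). ring.
Qed.

Lemma zsum_scal c f : zsum (fun n => c * f n) = c * zsum f.
Proof.
  unfold zsum. rewrite (Series_scal_l c (fun n => f (Z.of_nat n))),
    (Series_scal_l c (fun n => f (- Z.of_nat (S n))%Z)). ring.
Qed.

Lemma Series_nonneg (a : nat -> R) : ex_series a -> (forall n, 0 <= a n) -> 0 <= Series a.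
Proof.
  intros Ha H. assert (E : Series (fun _ => 0) = 0).
  { rewrite (Series_ext (fun _ => 0) (fun n => 0 * a n)) by (intros; ring).
    rewrite Series_scal_l. ring. }
  rewrite <- E. apply Series_le; auto. intros n; split; [lra|apply H].
Qed.

Lemma zsum_nonneg f : zs f -> (forall n, 0 <= f n) -> 0 <= zsum f.
Proof.
  intros [A B] H. unfold zsum.
  apply Rplus_le_le_0_compat; apply Series_nonneg; auto.
Qed.

Lemma zsum_le f g : zs f -> zs g -> (forall n, f n <= g n) -> zsum f <= zsum g.
Proof.
  intros Hf Hg H. assert (0 <= zsum (fun n => g n - f n)).
  { apply zsum_nonneg; [apply zs_minus; auto|]. intros n; specialize (H n); lra. }
  rewrite zsum_minus in H0 by auto. lra.
Qed.


Lemma sign_XY (x y : R) : (Rmax y 0 - Rmax x 0) * (Rmin y 0 - Rmin x 0) >= 0.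
Proof.
  unfold Rmax, Rmin; destruct (Rle_dec y 0); destruct (Rle_dec x 0); nra.
Qed.

Lemma split_val (x : R) : x = Rmax x 0 + Rmin x 0.
Proof. unfold Rmax, Rmin; destruct (Rle_dec x 0); lra. Qed.

Lemma abs_sum X Y : X * Y >= 0 -> Rabs (X + Y) = Rabs X + Rabs Y.
Proof.
  intros H. destruct (Rcase_abs X), (Rcase_abs Y), (Rcase_abs (X + Y));
  repeat first [rewrite Rabs_left by lra | rewrite Rabs_right by lra]; nra.
Qed.

Lemma pow_even_le m x y : Rabs x <= Rabs y -> x ^ (2 * m) <= y ^ (2 * m).
Proof.
  intros H. rewrite <- (pow_abs_even m x), <- (pow_abs_even m y).
  apply pow_incr; split; auto; apply Rabs_pos.
Qed.

Lemma comb_le m s t X Y : 0 <= s -> 0 <= t -> X * Y >= 0 ->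
  (s * X + t * Y) ^ (2 * m) <= (s + t) ^ (2 * m) * (X + Y) ^ (2 * m).
Proof.
  intros Hs Ht H. rewrite <- Rpow_mult_distr. apply pow_even_le.
  rewrite (Rabs_mult (s + t)). rewrite (abs_sum X Y H). rewrite (Rabs_right (s + t)) by lra.
  eapply Rle_trans; [apply Rabs_triang|]. rewrite !Rabs_mult.
  rewrite (Rabs_right s) by lra. rewrite (Rabs_right t) by lra.
  pose proof (Rabs_pos X); pose proof (Rabs_pos Y). nra.
Qed.

Lemma odd_abs_le m x y : (1 <= m)%nat -> Rabs y <= Rabs x -> Rabs (x ^ (2 * m - 1) * y) <= x ^ (2 * m).
Proof.
  intros Hm H. rewrite Rabs_mult, <- RPow_abs. rewrite <- (pow_abs_even m x).
  replace (2 * m)%nat with (S (2 * m - 1)) at 2 by lia. simpl.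
  rewrite Rmult_comm. apply Rmult_le_compat_r; auto. apply pow_le, Rabs_pos.
Qed.

Definition LT (q r cn y : R) : R :=
  if Req_EM_T y 0 then 0 else cn * rpow (Rabs y) q * ln (rpow (Rabs y) r).
Definition BT (q r cn U V : R) : R :=
  if Req_EM_T U 0 then 0 else cn * rpow (Rabs U) (q - 2) * U * V * ln (rpow (Rabs U) r).

Lemma LT_0 q r cn : LT q r cn 0 = 0.
Proof. unfold LT; destruct (Req_EM_T 0 0); [auto|contradiction]. Qed.

Lemma BT_0 q r cn V : BT q r cn 0 V = 0.
Proof. unfold BT; destruct (Req_EM_T 0 0); [auto|contradiction]. Qed.

Lemma BT_U q r cn U : BT q r cn U U = LT q r cn U.
Proof.
  unfold BT, LT; destruct (Req_EM_T U 0); auto.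
  rewrite <- (rpow_q2 q U) by auto. ring.
Qed.

Lemma BT_z q r cn U : BT q r cn U 0 = 0.
Proof. unfold BT; destruct (Req_EM_T U 0); auto; ring. Qed.

Lemma LT_scale q r cn l U : 0 < l -> U <> 0 ->
  LT q r cn (l * U) = rpow l q * (r * ln l * (cn * rpow (Rabs U) q) + LT q r cn U).
Proof.
  intros Hl HU. unfold LT.
  destruct (Req_EM_T (l * U) 0) as [E|E]; [exfalso; apply Rmult_integral in E; lra|].
  destruct (Req_EM_T U 0) as [F|F]; [contradiction|].
  assert (HA : 0 < Rabs U) by (apply Rabs_pos_lt; auto).
  rewrite Rabs_mult, (Rabs_right l) by lra.
  rewrite !rpow_mult by lra.
  rewrite ln_mult by (rewrite rpow_pos by lra; unfold Rpower; apply exp_pos).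
  rewrite (ln_rpow l) by auto. ring.
Qed.

Lemma cpart_one q r cn U l : 0 < q -> 1 <= r -> 0 <= cn -> U <> 0 -> 0 <= l ->
  0 <= r / q ^ 2 * (cn * rpow (Rabs U) q) - / q * LT q r cn U
       - (r / q ^ 2 * (cn * rpow (Rabs (l * U)) q) - / q * LT q r cn (l * U))
       + (1 - rpow l q) / q * LT q r cn U.
Proof.
  intros Hq Hr Hc HU Hl.
  assert (HR : 0 <= rpow (Rabs U) q) by apply rpow_ge0.
  destruct (Req_EM_T l 0) as [E|E].
  - subst. rewrite Rmult_0_l, Rabs_R0, !rpow_0, LT_0.
    replace (r / q ^ 2 * (cn * rpow (Rabs U) q) - / q * LT q r cn U - (r / q ^ 2 * (cn * 0) - / q * 0) +
      (1 - 0) / q * LT q r cn U) with ((r / q ^ 2) * (cn * rpow (Rabs U) q)) by (field; lra).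
    apply Rmult_le_pos; [|apply Rmult_le_pos; auto].
    unfold Rdiv; apply Rmult_le_pos; [lra|]. left; apply Rinv_0_lt_compat; apply pow_lt; lra.
  - assert (Hl' : 0 < l) by lra.
    rewrite LT_scale by auto.
    rewrite Rabs_mult, (Rabs_right l) by lra. rewrite rpow_mult by (try apply Rabs_pos; lra).
    set (sg := rpow l q).
    assert (Hsg : 0 < sg) by (unfold sg; rewrite rpow_pos by lra; unfold Rpower; apply exp_pos).
    assert (Hln : ln sg = q * ln l) by (unfold sg; apply ln_rpow; auto).
    set (C := cn * rpow (Rabs U) q).
    assert (HC : 0 <= C) by (unfold C; apply Rmult_le_pos; auto).
    replace (r / q ^ 2 * C - / q * LT q r cn U - (r / q ^ 2 * (cn * (sg * rpow (Rabs U) q)) -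
      / q * (sg * (r * ln l * C + LT q r cn U))) + (1 - sg) / q * LT q r cn U)
      with (C * r / q ^ 2 * (1 - sg + sg * ln sg)) by (rewrite Hln; unfold C; field; lra).
    pose proof (xlnx sg Hsg).
    apply Rmult_le_pos; [|lra].
    unfold Rdiv; apply Rmult_le_pos; [apply Rmult_le_pos; lra|]. left; apply Rinv_0_lt_compat; apply pow_lt; lra.
Qed.

Lemma cpart q r cn U s t : 0 < q -> 1 <= r -> 0 <= cn -> 0 <= s -> 0 <= t ->
  0 <= r / q ^ 2 * (cn * rpow (Rabs U) q) - / q * LT q r cn U
       - (r / q ^ 2 * (cn * rpow (Rabs (s * Rmax U 0 + t * Rmin U 0)) q)
          - / q * LT q r cn (s * Rmax U 0 + t * Rmin U 0))
       + (1 - rpow s q) / q * BT q r cn U (Rmax U 0)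
       + (1 - rpow t q) / q * BT q r cn U (Rmin U 0).
Proof.
  intros Hq Hr Hc Hs Ht.
  destruct (Rtotal_order U 0) as [HU|[HU|HU]].
  - rewrite Rmax_right, Rmin_left by lra. rewrite BT_U, BT_z.
    replace (s * 0 + t * U) with (t * U) by ring.
    pose proof (cpart_one q r cn U t Hq Hr Hc ltac:(lra) Ht). lra.
  - subst. rewrite Rmax_right, Rmin_right by lra. rewrite !BT_0.
    replace (s * 0 + t * 0) with 0 by ring. rewrite Rabs_R0, rpow_0, LT_0. lra.
  - rewrite Rmax_left, Rmin_right by lra. rewrite BT_U, BT_z.
    replace (s * U + t * 0) with (s * U) by ring.
    pose proof (cpart_one q r cn U s Hq Hr Hc ltac:(lra) Hs). lra.
Qed.


Lemma fdiff_split u n : fdiff u n = fdiff (posp u) n + fdiff (negp u) n.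
Proof.
  unfold fdiff, posp, negp. pose proof (split_val (u (n + 1)%Z)). pose proof (split_val (u n)). lra.
Qed.

Lemma XY_nonneg u n : fdiff (posp u) n * fdiff (negp u) n >= 0.
Proof. unfold fdiff, posp, negp. apply sign_XY. Qed.

Lemma posp_dle u n : Rabs (fdiff (posp u) n) <= Rabs (fdiff u n).
Proof. rewrite (fdiff_split u n), abs_sum by apply XY_nonneg. pose proof (Rabs_pos (fdiff (negp u) n)). lra. Qed.

Lemma negp_dle u n : Rabs (fdiff (negp u) n) <= Rabs (fdiff u n).
Proof. rewrite (fdiff_split u n), abs_sum by apply XY_nonneg. pose proof (Rabs_pos (fdiff (posp u) n)). lra. Qed.

Lemma posp_le u n : Rabs (posp u n) <= Rabs (u n).
Proof. unfold posp, Rmax. destruct (Rle_dec (u n) 0); [rewrite Rabs_R0; apply Rabs_pos|lra]. Qed.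

Lemma negp_le u n : Rabs (negp u n) <= Rabs (u n).
Proof. unfold negp, Rmin. destruct (Rle_dec (u n) 0); [lra|rewrite Rabs_R0; apply Rabs_pos]. Qed.

Lemma normp_nonneg p a b v n : (forall n, 0 < a n) -> (forall n, 0 < b n) -> 0 <= normp_term p a b v n.
Proof.
  intros Ha Hb. unfold normp_term.
  pose proof (Ha n); pose proof (Hb n).
  pose proof (rpow_ge0 (Rabs (fdiff v n)) p); pose proof (rpow_ge0 (Rabs (v n)) p).
  apply Rplus_le_le_0_compat; apply Rmult_le_pos; lra.
Qed.

Lemma Nf_bound m a b u v s' t' n : (1 <= m)%nat -> (forall n, 0 < a n) -> (forall n, 0 < b n) ->
  0 <= s' -> 0 <= t' -> (forall k, v k = s' * posp u k + t' * negp u k) ->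
  normp_term (2 * INR m) a b v n <= (s' + t') ^ (2 * m) * normp_term (2 * INR m) a b u n.
Proof.
  intros Hm Ha Hb Hs Ht Hv. unfold normp_term. rewrite !rpow_even by auto.
  assert (E1 : fdiff v n = s' * fdiff (posp u) n + t' * fdiff (negp u) n)
    by (unfold fdiff; rewrite !Hv; ring).
  rewrite E1, (fdiff_split u n), (Hv n).
  assert (Eu : u n = posp u n + negp u n) by (unfold posp, negp; apply split_val).
  rewrite Eu.
  pose proof (comb_le m s' t' _ _ Hs Ht (XY_nonneg u n)).
  assert (posp u n * negp u n >= 0) by (unfold posp, negp, Rmax, Rmin; destruct (Rle_dec (u n) 0); nra).
  pose proof (comb_le m s' t' _ _ Hs Ht H0).
  pose proof (Ha n); pose proof (Hb n).
  assert (an_le : a n * (s' * fdiff (posp u) n + t' * fdiff (negp u) n) ^ (2 * m) <=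
     a n * ((s' + t') ^ (2 * m) * (fdiff (posp u) n + fdiff (negp u) n) ^ (2 * m)))
    by (apply Rmult_le_compat_l; lra).
  assert (bn_le : b n * (s' * posp u n + t' * negp u n) ^ (2 * m) <=
     b n * ((s' + t') ^ (2 * m) * (posp u n + negp u n) ^ (2 * m)))
    by (apply Rmult_le_compat_l; lra).
  lra.
Qed.

Lemma Af_bound m a b u V n : (1 <= m)%nat -> (forall n, 0 < a n) -> (forall n, 0 < b n) ->
  Rabs (fdiff V n) <= Rabs (fdiff u n) -> Rabs (V n) <= Rabs (u n) ->
  Rabs (a n * rpow (Rabs (fdiff u n)) (2 * INR m - 2) * fdiff u n * fdiff V n
        + b n * rpow (Rabs (u n)) (2 * INR m - 2) * u n * V n) <= normp_term (2 * INR m) a b u n.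
Proof.
  intros Hm Ha Hb H1 H2. unfold normp_term. rewrite !rpow_pm2, !rpow_even by auto.
  eapply Rle_trans; [apply Rabs_triang|].
  rewrite !Rmult_assoc, (Rabs_mult (a n)), (Rabs_mult (b n)), (Rabs_right (a n)), (Rabs_right (b n)) by (apply Rle_ge, Rlt_le; auto).
  pose proof (odd_abs_le m _ _ Hm H1). pose proof (odd_abs_le m _ _ Hm H2).
  pose proof (Ha n); pose proof (Hb n).
  apply Rplus_le_compat; apply Rmult_le_compat_l; lra.
Qed.

Lemma Bf_bound_max q r cn U : Rabs (BT q r cn U (Rmax U 0)) <= Rabs (LT q r cn U).
Proof.
  destruct (Rle_dec U 0).
  - rewrite Rmax_right by lra. rewrite BT_z, Rabs_R0. apply Rabs_pos.
  - rewrite Rmax_left by lra. rewrite BT_U. lra.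
Qed.

Lemma Bf_bound_min q r cn U : Rabs (BT q r cn U (Rmin U 0)) <= Rabs (LT q r cn U).
Proof.
  destruct (Rle_dec U 0).
  - rewrite Rmin_left by lra. rewrite BT_U. lra.
  - rewrite Rmin_right by lra. rewrite BT_z, Rabs_R0. apply Rabs_pos.
Qed.

Lemma Cw_bound q cn U s t : 0 <= cn -> 0 <= s -> 0 <= t -> 0 <= q ->
  cn * rpow (Rabs (s * Rmax U 0 + t * Rmin U 0)) q <= rpow (s + t) q * (cn * rpow (Rabs U) q).
Proof.
  intros Hc Hs Ht Hq.
  assert (H : Rabs (s * Rmax U 0 + t * Rmin U 0) <= (s + t) * Rabs U).
  { unfold Rmax, Rmin; destruct (Rle_dec U 0).
    - replace (s * 0 + t * U) with (t * U) by ring. rewrite Rabs_mult, (Rabs_right t) by lra.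
      pose proof (Rabs_pos U); nra.
    - replace (s * U + t * 0) with (s * U) by ring. rewrite Rabs_mult, (Rabs_right s) by lra.
      pose proof (Rabs_pos U); nra. }
  pose proof (rpow_le q _ _ Hq (conj (Rabs_pos _) H)).
  rewrite rpow_mult in H0 by (try apply Rabs_pos; lra).
  assert (cn * rpow (Rabs (s * Rmax U 0 + t * Rmin U 0)) q <= cn * (rpow (s + t) q * rpow (Rabs U) q))
    by (apply Rmult_le_compat_l; auto).
  lra.
Qed.

Lemma LT_abs_scale q r cn U l : 0 <= cn -> 0 <= l ->
  Rabs (LT q r cn (l * U)) <= rpow l q * (Rabs (r * ln l) + 1) * (cn * rpow (Rabs U) q + Rabs (LT q r cn U)).
Proof.
  intros Hc Hl.
  assert (HC : 0 <= cn * rpow (Rabs U) q) by (apply Rmult_le_pos; auto; apply rpow_ge0).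
  assert (Hnn : 0 <= rpow l q * (Rabs (r * ln l) + 1) * (cn * rpow (Rabs U) q + Rabs (LT q r cn U))).
  { apply Rmult_le_pos; [apply Rmult_le_pos; [apply rpow_ge0|pose proof (Rabs_pos (r * ln l)); lra]|].
    pose proof (Rabs_pos (LT q r cn U)); lra. }
  destruct (Req_EM_T l 0) as [E|E]; [subst; rewrite Rmult_0_l, LT_0, Rabs_R0; rewrite ?LT_0, ?Rabs_R0, ?rpow_0 in *; auto|].
  destruct (Req_EM_T U 0) as [F|F]; [subst; rewrite Rmult_0_r, LT_0, Rabs_R0; rewrite ?LT_0, ?Rabs_R0, ?rpow_0 in *; auto|].
  rewrite LT_scale by (auto; lra).
  set (sg := rpow l q). assert (0 <= sg) by apply rpow_ge0.
  set (C := cn * rpow (Rabs U) q) in *. set (L := LT q r cn U).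
  rewrite Rabs_mult, (Rabs_right sg) by lra.
  rewrite (Rmult_assoc sg (Rabs (r * ln l) + 1)). apply Rmult_le_compat_l; auto.
  eapply Rle_trans; [apply Rabs_triang|]. rewrite Rabs_mult, (Rabs_right C) by lra.
  pose proof (Rabs_pos (r * ln l)); pose proof (Rabs_pos L). nra.
Qed.

Lemma Lw_bound q r cn U s t : 0 <= cn -> 0 <= s -> 0 <= t ->
  Rabs (LT q r cn (s * Rmax U 0 + t * Rmin U 0)) <=
  (rpow s q * (Rabs (r * ln s) + 1) + rpow t q * (Rabs (r * ln t) + 1)) *
  (cn * rpow (Rabs U) q + Rabs (LT q r cn U)).
Proof.
  intros Hc Hs Ht.
  assert (HC : 0 <= cn * rpow (Rabs U) q + Rabs (LT q r cn U))
    by (pose proof (Rabs_pos (LT q r cn U)); assert (0 <= cn * rpow (Rabs U) q) by (apply Rmult_le_pos; auto; apply rpow_ge0); lra).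
  assert (K1 : 0 <= rpow s q * (Rabs (r * ln s) + 1))
    by (apply Rmult_le_pos; [apply rpow_ge0|pose proof (Rabs_pos (r * ln s)); lra]).
  assert (K2 : 0 <= rpow t q * (Rabs (r * ln t) + 1))
    by (apply Rmult_le_pos; [apply rpow_ge0|pose proof (Rabs_pos (r * ln t)); lra]).
  unfold Rmax, Rmin; destruct (Rle_dec U 0).
  - replace (s * 0 + t * U) with (t * U) by ring.
    pose proof (LT_abs_scale q r cn U t Hc Ht).
    assert (0 <= rpow s q * (Rabs (r * ln s) + 1) * (cn * rpow (Rabs U) q + Rabs (LT q r cn U)))
      by (apply Rmult_le_pos; auto).
    nra.
  - replace (s * U + t * 0) with (s * U) by ring.
    pose proof (LT_abs_scale q r cn U s Hc Hs).
    assert (0 <= rpow t q * (Rabs (r * ln t) + 1) * (cn * rpow (Rabs U) q + Rabs (LT q r cn U)))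
      by (apply Rmult_le_pos; auto).
    nra.
Qed.

Lemma Cu_bound q r p cn c0 an bn b0 D U : 0 < b0 -> b0 <= bn -> 0 <= cn -> cn <= c0 -> 0 <= an ->
  0 <= D -> 1 <= r -> 0 < p -> p < q ->
  cn * rpow (Rabs U) q <= (rpow (exp 1) (q - p) * c0 / b0) * (an * D + bn * rpow (Rabs U) p)
                          + Rabs (LT q r cn U).
Proof.
  intros Hb0 Hbn Hc Hc0 Han HD Hr Hp Hpq.
  pose proof (Rabs_pos (LT q r cn U)) as HL.
  assert (HE : 0 <= rpow (exp 1) (q - p)) by apply rpow_ge0.
  assert (HRp : 0 <= rpow (Rabs U) p) by apply rpow_ge0.
  assert (Hfirst : 0 <= (rpow (exp 1) (q - p) * c0 / b0) * (an * D)).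
  { apply Rmult_le_pos; [|apply Rmult_le_pos; auto]. unfold Rdiv.
    apply Rmult_le_pos; [apply Rmult_le_pos; lra|left; apply Rinv_0_lt_compat; lra]. }
  destruct (Req_EM_T U 0) as [E|E].
  { subst. rewrite Rabs_R0, rpow_0, rpow_0. rewrite Rmult_0_r, Rmult_0_r, Rplus_0_r. lra. }
  assert (HA : 0 < Rabs U) by (apply Rabs_pos_lt; auto).
  destruct (Rle_dec (Rabs U) (exp 1)) as [Hle|Hgt].
  - assert (Hsplit : rpow (Rabs U) q = rpow (Rabs U) (q - p) * rpow (Rabs U) p).
    { rewrite !rpow_pos by auto. rewrite <- Rpower_plus. f_equal; ring. }
    assert (H1 : rpow (Rabs U) (q - p) <= rpow (exp 1) (q - p)) by (apply rpow_le; lra).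
    assert (H2 : cn * rpow (Rabs U) q <= c0 * rpow (exp 1) (q - p) * rpow (Rabs U) p).
    { rewrite Hsplit. pose proof (rpow_ge0 (Rabs U) (q - p)).
      apply Rle_trans with (cn * (rpow (exp 1) (q - p) * rpow (Rabs U) p)).
      - apply Rmult_le_compat_l; auto. apply Rmult_le_compat_r; auto.
      - rewrite <- Rmult_assoc. apply Rmult_le_compat_r; auto. apply Rmult_le_compat_r; auto. }
    assert (H3 : c0 * rpow (exp 1) (q - p) * rpow (Rabs U) p <=
                 (rpow (exp 1) (q - p) * c0 / b0) * (bn * rpow (Rabs U) p)).
    { replace ((rpow (exp 1) (q - p) * c0 / b0) * (bn * rpow (Rabs U) p)) with
        (c0 * rpow (exp 1) (q - p) * rpow (Rabs U) p * (bn / b0)) by (field; lra).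
      rewrite <- (Rmult_1_r (c0 * rpow (exp 1) (q - p) * rpow (Rabs U) p)) at 1.
      apply Rmult_le_compat_l; [apply Rmult_le_pos; [apply Rmult_le_pos|]; lra|].
      apply Rmult_le_reg_r with b0; auto. unfold Rdiv. rewrite Rmult_assoc, Rinv_l by lra. lra. }
    rewrite Rmult_plus_distr_l. lra.
  - assert (Hln : 1 <= ln (rpow (Rabs U) r)).
    { rewrite ln_rpow by auto.
      assert (1 < ln (Rabs U)) by (rewrite <- (ln_exp 1) at 1; apply ln_increasing; [apply exp_pos|lra]).
      nra. }
    assert (HLT : LT q r cn U = cn * rpow (Rabs U) q * ln (rpow (Rabs U) r))
      by (unfold LT; destruct (Req_EM_T U 0); [contradiction|reflexivity]).
    assert (0 <= cn * rpow (Rabs U) q) by (apply Rmult_le_pos; auto; apply rpow_ge0).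
    assert (cn * rpow (Rabs U) q <= Rabs (LT q r cn U)).
    { rewrite HLT. rewrite (Rabs_right (cn * rpow (Rabs U) q * ln (rpow (Rabs U) r))) by (apply Rle_ge, Rmult_le_pos; lra). nra. }
    assert (0 <= (rpow (exp 1) (q - p) * c0 / b0) * (bn * rpow (Rabs U) p)).
    { apply Rmult_le_pos; [|apply Rmult_le_pos; lra]. unfold Rdiv.
      apply Rmult_le_pos; [apply Rmult_le_pos; lra|left; apply Rinv_0_lt_compat; lra]. }
    rewrite Rmult_plus_distr_l. lra.
Qed.

Lemma fdiff_comb u s t n : fdiff (fun k => s * posp u k + t * negp u k) n = s * fdiff (posp u) n + t * fdiff (negp u) n.
Proof. unfold fdiff. ring. Qed.


Ltac solve_zs := repeat (first [assumption | apply zs_minus | apply zs_plus | apply zs_scal]).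

Theorem lemma2p2
  (p q r : R) (m : nat) (a b c : Z -> R)
  (Hm : (1 <= m)%nat) (Hp : p = 2 * INR m)
  (H1p : 1 < p) (Hpq : p < q) (Hr : 1 <= r)
  (Ha : forall n, 0 < a n) (Hb : forall n, 0 < b n) (Hc : forall n, 0 < c n)
  (C1 : exists b0, 0 < b0 /\ (forall n, b0 <= b n) /\
        (forall M, exists N : Z, forall n : Z, (N <= Z.abs n)%Z -> M <= b n))
  (C2 : exists c0, 0 < c0 /\ (forall n, c n <= c0) /\ zsummable c)
  (u : Z -> R) (Hu : inD p q r a b c u) (s t : R) (Hs : 0 <= s) (Ht : 0 <= t) :
  Ifun p q r a b c u >=
    Ifun p q r a b c (fun n => s * posp u n + t * negp u n)
    + (1 - rpow s q) / q * dI p q r a b c u (posp u)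
    + (1 - rpow t q) / q * dI p q r a b c u (negp u)
    + ((1 - rpow s p) / p - (1 - rpow s q) / q) * rpow (normE p a b (posp u)) p
    + ((1 - rpow t p) / p - (1 - rpow t q) / q) * rpow (normE p a b (negp u)) p
    + zsum (fun n => a n *
        lsum (seq 1 (m - 1)%nat) (fun i =>
          lsum (seq 1 (i - 1)%nat) (fun j =>
            2 ^ (i - j)%nat
            * Rabs (fdiff (posp u) n ^ (2 * m - (i + j))%nat
                    * fdiff (negp u) n ^ (i + j))
            * Theta m s t i j)))
  /\ (forall i j : nat, (1 <= i <= m - 1)%nat -> (1 <= j <= i - 1)%nat ->
        0 <= Theta m s t i j).
Proof.
  split; [|intros; apply Theta_nonneg; auto].
  destruct C1 as [b0 [Hb0 [Hbb _]]]. destruct C2 as [c0 [Hc0 [Hcc _]]].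
  destruct Hu as [HN HL].
  assert (Hm' : 0 < INR m) by (apply lt_0_INR; lia).
  subst p.
  assert (Hq : 0 < q) by lra.
  assert (Es : rpow s (2 * INR m) = s ^ (2 * m))
    by (rewrite <- (Rabs_right s) at 1 by lra; apply rpow_even; auto).
  assert (Et : rpow t (2 * INR m) = t ^ (2 * m))
    by (rewrite <- (Rabs_right t) at 1 by lra; apply rpow_even; auto).
  assert (Hals : (1 - rpow s q) / q <= (1 - s ^ (2 * m)) / (2 * INR m))
    by (rewrite <- Es; apply alpha_le; lra).
  assert (Halt : (1 - rpow t q) / q <= (1 - t ^ (2 * m)) / (2 * INR m))
    by (rewrite <- Et; apply alpha_le; lra).
  pose proof (zs_of _ HN) as zsN.
  pose proof (zs_of _ HL) as zsL.
  pose proof (zs_abs _ HL) as zsLa.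
  assert (zsC : zs (fun n => c n * rpow (Rabs (u n)) q)).
  { apply zs_dom with (g := fun n => (rpow (exp 1) (q - 2 * INR m) * c0 / b0) *
        normp_term (2 * INR m) a b u n + Rabs (logterm q r c u n)).
    - intros n. rewrite Rabs_right by (apply Rle_ge, Rmult_le_pos; [left; apply Hc|apply rpow_ge0]).
      apply (Cu_bound q r (2 * INR m) (c n) c0 (a n) (b n) b0 (rpow (Rabs (fdiff u n)) (2 * INR m)) (u n));
        auto; try lra; try apply rpow_ge0; try (left; apply Hc); left; apply Ha.
    - apply zs_plus; [apply zs_scal; exact zsN|exact zsLa]. }
  assert (zsNw : zs (normp_term (2 * INR m) a b (fun n => s * posp u n + t * negp u n))).
  { apply zs_dom with (g := fun n => (s + t) ^ (2 * m) * normp_term (2 * INR m) a b u n);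
      [|apply zs_scal; exact zsN].
    intros n. rewrite Rabs_right by (apply Rle_ge, normp_nonneg; auto).
    apply Nf_bound; auto. }
  assert (zsNp : zs (normp_term (2 * INR m) a b (posp u))).
  { apply zs_dom with (g := fun n => (1 + 0) ^ (2 * m) * normp_term (2 * INR m) a b u n);
      [|apply zs_scal; exact zsN].
    intros n. rewrite Rabs_right by (apply Rle_ge, normp_nonneg; auto).
    apply Nf_bound; auto; try lra. intros; ring. }
  assert (zsNm : zs (normp_term (2 * INR m) a b (negp u))).
  { apply zs_dom with (g := fun n => (0 + 1) ^ (2 * m) * normp_term (2 * INR m) a b u n);
      [|apply zs_scal; exact zsN].
    intros n. rewrite Rabs_right by (apply Rle_ge, normp_nonneg; auto).
    apply Nf_bound; auto; try lra. intros; ring. }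
  assert (zsCw : zs (fun n => c n * rpow (Rabs (s * posp u n + t * negp u n)) q)).
  { apply zs_dom with (g := fun n => rpow (s + t) q * (c n * rpow (Rabs (u n)) q));
      [|apply zs_scal; exact zsC].
    intros n. rewrite Rabs_right by (apply Rle_ge, Rmult_le_pos; [left; apply Hc|apply rpow_ge0]).
    apply Cw_bound; auto; try lra. left; apply Hc. }
  assert (zsLw : zs (logterm q r c (fun n => s * posp u n + t * negp u n))).
  { apply zs_dom with (g := fun n => (rpow s q * (Rabs (r * ln s) + 1) + rpow t q * (Rabs (r * ln t) + 1)) *
        (c n * rpow (Rabs (u n)) q + Rabs (logterm q r c u n)));
      [|apply zs_scal; apply zs_plus; auto].
    intros n. apply (Lw_bound q r (c n) (u n) s t); auto. left; apply Hc. }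
  assert (zsAp : zs (fun n => a n * rpow (Rabs (fdiff u n)) (2 * INR m - 2) * fdiff u n * fdiff (posp u) n
                   + b n * rpow (Rabs (u n)) (2 * INR m - 2) * u n * posp u n)).
  { apply zs_dom with (g := normp_term (2 * INR m) a b u); auto.
    intros n; apply Af_bound; auto; [apply posp_dle|apply posp_le]. }
  assert (zsAm : zs (fun n => a n * rpow (Rabs (fdiff u n)) (2 * INR m - 2) * fdiff u n * fdiff (negp u) n
                   + b n * rpow (Rabs (u n)) (2 * INR m - 2) * u n * negp u n)).
  { apply zs_dom with (g := normp_term (2 * INR m) a b u); auto.
    intros n; apply Af_bound; auto; [apply negp_dle|apply negp_le]. }
  assert (zsBp : zs (fun n => if Req_EM_T (u n) 0 then 0
                   else c n * rpow (Rabs (u n)) (q - 2) * u n * posp u n * ln (rpow (Rabs (u n)) r))).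
  { apply zs_dom with (g := fun n => Rabs (logterm q r c u n)); auto.
    intros n; apply (Bf_bound_max q r (c n) (u n)). }
  assert (zsBm : zs (fun n => if Req_EM_T (u n) 0 then 0
                   else c n * rpow (Rabs (u n)) (q - 2) * u n * negp u n * ln (rpow (Rabs (u n)) r))).
  { apply zs_dom with (g := fun n => Rabs (logterm q r c u n)); auto.
    intros n; apply (Bf_bound_min q r (c n) (u n)). }
  assert (EN : forall v, zs (normp_term (2 * INR m) a b v) ->
     rpow (normE (2 * INR m) a b v) (2 * INR m) = zsum (normp_term (2 * INR m) a b v)).
  { intros v Hv. unfold normE. apply rpow_inv; [|lra].
    apply zsum_nonneg; auto. intros; apply normp_nonneg; auto. }
  unfold Ifun, dI. cbv beta.
  rewrite (EN _ zsN), (EN _ zsNw), (EN _ zsNp), (EN _ zsNm).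
  set (w := fun n => s * posp u n + t * negp u n).
  set (Ap := fun n => a n * rpow (Rabs (fdiff u n)) (2 * INR m - 2) * fdiff u n * fdiff (posp u) n
                   + b n * rpow (Rabs (u n)) (2 * INR m - 2) * u n * posp u n) in *.
  set (Am := fun n => a n * rpow (Rabs (fdiff u n)) (2 * INR m - 2) * fdiff u n * fdiff (negp u) n
                   + b n * rpow (Rabs (u n)) (2 * INR m - 2) * u n * negp u n) in *.
  set (Bp := fun n => if Req_EM_T (u n) 0 then 0
                   else c n * rpow (Rabs (u n)) (q - 2) * u n * posp u n * ln (rpow (Rabs (u n)) r)) in *.
  set (Bm := fun n => if Req_EM_T (u n) 0 then 0
                   else c n * rpow (Rabs (u n)) (q - 2) * u n * negp u n * ln (rpow (Rabs (u n)) r)) in *.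
  set (Cu := fun n => c n * rpow (Rabs (u n)) q) in *.
  set (Cw := fun n => c n * rpow (Rabs (s * posp u n + t * negp u n)) q) in *.
  set (Ef := fun n => a n *
        lsum (seq 1 (m - 1)%nat) (fun i =>
          lsum (seq 1 (i - 1)%nat) (fun j =>
            2 ^ (i - j)%nat
            * Rabs (fdiff (posp u) n ^ (2 * m - (i + j))%nat
                    * fdiff (negp u) n ^ (i + j))
            * Theta m s t i j))).
  set (al := (1 - rpow s q) / q) in *.
  set (bt := (1 - rpow t q) / q) in *.
  set (gms := (1 - rpow s (2 * INR m)) / (2 * INR m) - al).
  set (gmt := (1 - rpow t (2 * INR m)) / (2 * INR m) - bt).
  set (F := fun n => / (2 * INR m) * normp_term (2 * INR m) a b u n + r / q ^ 2 * Cu n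
      - / q * logterm q r c u n
      - (/ (2 * INR m) * normp_term (2 * INR m) a b w n + r / q ^ 2 * Cw n - / q * logterm q r c w n)
      - al * (Ap n - Bp n) - bt * (Am n - Bm n)
      - gms * normp_term (2 * INR m) a b (posp u) n - gmt * normp_term (2 * INR m) a b (negp u) n).
  assert (zsF : zs F) by (unfold F; solve_zs).
  assert (EF : zsum F = / (2 * INR m) * zsum (normp_term (2 * INR m) a b u) + r / q ^ 2 * zsum Cu -
     / q * zsum (logterm q r c u) -
     (/ (2 * INR m) * zsum (normp_term (2 * INR m) a b w) + r / q ^ 2 * zsum Cw -
     / q * zsum (logterm q r c w)) - al * (zsum Ap - zsum Bp) -
     bt * (zsum Am - zsum Bm) - gms * zsum (normp_term (2 * INR m) a b (posp u)) -
     gmt * zsum (normp_term (2 * INR m) a b (negp u))).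
  { unfold F. repeat (first [rewrite zsum_minus by solve_zs | rewrite zsum_plus by solve_zs | rewrite zsum_scal]).
    reflexivity. }
  assert (FE : forall n, 0 <= Ef n <= F n).
  { intros n.
    change (Ef n) with (a n * Ep m s t (fdiff (posp u) n) (fdiff (negp u) n)).
    pose proof (core m s t al bt (fdiff (posp u) n) (fdiff (negp u) n) Hm Hs Ht (XY_nonneg u n) Hals Halt) as K1.
    assert (HUU : posp u n * negp u n >= 0)
      by (unfold posp, negp, Rmax, Rmin; destruct (Rle_dec (u n) 0); nra).
    pose proof (core m s t al bt (posp u n) (negp u n) Hm Hs Ht HUU Hals Halt) as K2.
    pose proof (Ep_nonneg m s t (posp u n) (negp u n) Hs Ht) as K3.
    pose proof (Ep_nonneg m s t (fdiff (posp u) n) (fdiff (negp u) n) Hs Ht) as K3'.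
    pose proof (cpart q r (c n) (u n) s t Hq Hr (Rlt_le _ _ (Hc n)) Hs Ht) as K4.
    change ((1 - rpow s q) / q) with al in K4. change ((1 - rpow t q) / q) with bt in K4.
    match type of K4 with 0 <= ?CP =>
      assert (EQ : F n = a n * Fcore m s t al bt (fdiff (posp u) n) (fdiff (negp u) n)
                       + b n * Fcore m s t al bt (posp u n) (negp u n) + CP) end.
    { unfold F, Fcore, normp_term, Ap, Am, Bp, Bm, Cu, Cw, gms, gmt.
      rewrite !rpow_even by auto. rewrite !rpow_pm2 by auto. rewrite Es, Et.
      assert (Ew : fdiff w n = s * fdiff (posp u) n + t * fdiff (negp u) n) by (apply fdiff_comb).
      rewrite Ew. replace (w n) with (s * posp u n + t * negp u n) by reflexivity.
      rewrite (fdiff_split u n).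
      assert (Eu : u n = posp u n + negp u n) by (unfold posp, negp; apply split_val).
      replace (u n ^ (2 * m)) with ((posp u n + negp u n) ^ (2 * m)) by (rewrite <- Eu; reflexivity).
      replace (u n ^ (2 * m - 1)) with ((posp u n + negp u n) ^ (2 * m - 1)) by (rewrite <- Eu; reflexivity).
      unfold logterm, LT, BT, w. cbv beta. unfold posp, negp. ring. }
    pose proof (Ha n); pose proof (Hb n).
    assert (a n * Ep m s t (fdiff (posp u) n) (fdiff (negp u) n) <=
            a n * Fcore m s t al bt (fdiff (posp u) n) (fdiff (negp u) n))
      by (apply Rmult_le_compat_l; lra).
    assert (0 <= b n * Fcore m s t al bt (posp u n) (negp u n))
      by (apply Rmult_le_pos; lra).
    assert (0 <= a n * Ep m s t (fdiff (posp u) n) (fdiff (negp u) n))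
      by (apply Rmult_le_pos; lra).
    rewrite EQ. lra. }
  assert (zsE : zs Ef).
  { apply zs_dom with (g := F); auto. intros n. destruct (FE n). rewrite Rabs_right; lra. }
  assert (Hle : zsum Ef <= zsum F) by (apply zsum_le; auto; intros n; apply FE).
  rewrite EF in Hle. lra.
Qed.
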